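(* Let $A=(a,\ ha+d,\ ha+3d,\ ha+5d,\ \dots,\ ha+(2k+1)d)$ where $\gcd(a,d)=1$, $a,h,d,k\in\mathbb{P}$, $a>2$, $3\le 2k+1\le a-1$. Write $a-1=(2k+1)s+t$ with $1\le t\le 2k+1$. If $t$ is even, then $$g(A)=ha\Big(\Big\lfloor\frac{a-2}{2k+1}\Big\rfloor+2\Big)+(a-1)d-a.$$ If $t$ is odd, then $$g(A)=\max\Big\{ha\Big(\Big\lfloor\frac{a-2}{2k+1}\Big\rfloor+1\Big)+(a-1)d-a,\ ha\Big(\Big\lfloor\frac{a-3}{2k+1}\Big\rfloor+2\Big)+(a-2)d-a\Big\}.$$ Furthermore, $$n(A)=hs\Big(ks+t+\frac12 s-\frac12\Big)+(a-1)\Big(\frac d2+h-\frac12\Big)+h\Big\lfloor\frac t2\Big\rfloor.$$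
   Context: For a tuple $A$ of positive integers with $\gcd(A)=1$, $\mathcal{NR}(A)$ is the finite set of nonnegative integers that cannot be written as a nonnegative integer combination of the entries of $A$; $g(A)=\max\mathcal{NR}(A)$ and $n(A)=|\mathcal{NR}(A)|$. $\mathbb{P}=\{1,2,\dots\}$. *)

(* Defs.v *)
From mathcomp Require Import all_boot all_order all_algebra.
Set Implicit Arguments. Unset Strict Implicit. Unset Printing Implicit Defensive.

Definition representable (A : seq nat) (n : nat) : Prop :=
  exists c : seq nat, size c = size A /\
    n = sumn [seq x.1 * x.2 | x <- zip c A].

Definition NR (A : seq nat) (m : nat) : Prop := ~ representable A m.

Definition is_frobenius (A : seq nat) (g : nat) : Prop :=
  NR A g /\ (forall m, NR A m -> m <= g).

Definition is_genus (A : seq nat) (N : nat) : Prop :=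
  exists l : seq nat, uniq l /\ (forall m, m \in l <-> NR A m) /\ size l = N.

Definition tupleA (a h d k : nat) : seq nat :=
  a :: [seq h * a + (2 * i + 1) * d | i <- iota 0 k.+1].

(* Main.v *)
Require Import Defs.
From mathcomp Require Import all_boot all_order all_algebra.
From mathcomp Require Import zify ring lra.

Lemma repr_cons y A n : representable (y :: A) n <->
  exists c0 n', n = c0 * y + n' /\ representable A n'.
Proof.
split.
- move=> [[|c0 c'] [//= hs ->]].
  exists c0, (sumn [seq x.1 * x.2 | x <- zip c' A]); split => //.
  by exists c'; split => //; case: hs.
- move=> [c0 [n' [-> [c' [hs ->]]]]].
  by exists (c0 :: c'); rewrite /= hs.
Qed.

Lemma repr_nil n : representable [::] n <-> n = 0.
Proof.
split.
- by move=> [[|c0 c'] [//= _ ->]].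
- by move=> ->; exists [::].
Qed.

Lemma repr0 A : representable A 0.
Proof.
elim: A => [|y A IH]; first by apply/repr_nil.
by apply/repr_cons; exists 0, 0.
Qed.

Lemma reprD A x z : representable A x -> representable A z -> representable A (x + z).
Proof.
elim: A x z => [|y A IH] x z.
- by move=> /repr_nil -> /repr_nil ->; apply/repr_nil.
- move=> /repr_cons [c0 [n0 [-> H0]]] /repr_cons [c1 [n1 [-> H1]]].
  apply/repr_cons; exists (c0 + c1), (n0 + n1); split; first lia.
  exact: IH.
Qed.

Lemma reprG A y : y \in A -> representable A y.
Proof.
elim: A => [|y' A IH] //.
rewrite in_cons => /orP [/eqP ->|H].
- by apply/repr_cons; exists 1, 0; split; [lia | apply: repr0].
- by apply/repr_cons; exists 0, y; split; [lia | apply: IH].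
Qed.

Lemma reprM A y q : representable A y -> representable A (q * y).
Proof.
move=> H; elim: q => [|q IH]; first by rewrite mul0n; apply: repr0.
by rewrite mulSn; apply: reprD.
Qed.

Definition Rep a h d k n := exists q j u, u <= k * j /\ n = q * a + j * (h * a + d) + 2 * u * d.

Lemma partR a h d p len n :
  representable [seq h * a + (2 * i + 1) * d | i <- iota p len] n ->
  exists j u, u + j <= (p + len) * j /\ n = j * (h * a + d) + 2 * u * d.
Proof.
elim: len p n => [|len IH] p n /=.
- by move=> /repr_nil ->; exists 0, 0; split; lia.
- move=> /repr_cons [c0 [n' [-> /IH [j [u [H1 ->]]]]]].
  exists (c0 + j), (c0 * p + u); split; [nia | nia].
Qed.

Lemma buildR a h d k j u : u <= k * j ->
  representable (tupleA a h d k) (j * (h * a + d) + 2 * u * d).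
Proof.
elim: j u => [|j IH] u Hu.
- have -> : u = 0 by lia.
  rewrite !muln0 mul0n; exact: repr0.
- have gen : forall i, i <= k -> representable (tupleA a h d k) (h * a + (2 * i + 1) * d).
    move=> i Hi; apply: reprG; rewrite /tupleA in_cons; apply/orP; right.
    apply/mapP; exists i => //; rewrite mem_iota; lia.
  case: (leqP u k) => Huk.
  + have -> : j.+1 * (h * a + d) + 2 * u * d = (h * a + (2 * u + 1) * d) + (j * (h * a + d) + 2 * 0 * d) by ring.
    apply: reprD; [exact: gen | apply: IH; lia].
  + have [v Hv] : exists v, u = k + v by exists (u - k); lia.
    have -> : j.+1 * (h * a + d) + 2 * u * d = (h * a + (2 * k + 1) * d) + (j * (h * a + d) + 2 * v * d).
      rewrite Hv; ring.
    have -> : v = u - k by lia.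
    apply: reprD; [exact: gen | apply: IH; nia].
Qed.

Lemma RepE a h d k n : representable (tupleA a h d k) n <-> Rep a h d k n.
Proof.
split.
- move=> /repr_cons [c0 [n' [-> /partR [j [u [H1 ->]]]]]].
  exists c0, j, u; split; [nia | nia].
- move=> [q [j [u [Hu ->]]]].
  rewrite -addnA; apply: reprD; last exact: buildR.
  apply: reprM; apply: reprG; exact: mem_head.
Qed.
Set Implicit Arguments. Unset Strict Implicit.

Definition cc k m := (m + 2 * k) %/ (2 * k + 1).
Definition j0 k m := cc k m + (cc k m + m) %% 2.
Definition w a h d k m := j0 k m * h * a + m * d.

Lemma cc_bounds k m : m <= cc k m * (2 * k + 1) /\ cc k m * (2 * k + 1) <= m + 2 * k.
Proof.
rewrite /cc.
have := divn_eq (m + 2 * k) (2 * k + 1).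
have : (m + 2 * k) %% (2 * k + 1) < 2 * k + 1 by rewrite ltn_pmod //; lia.
set c := (m + 2 * k) %/ (2 * k + 1); set r := (m + 2 * k) %% (2 * k + 1).
move=> Hr Hd; split; nia.
Qed.

Lemma cc_le k m : cc k m <= m.
Proof.
have [H1 H2] := cc_bounds k m.
case: (leqP (cc k m) m) => // Hcm.
have : (m + 1) * (2 * k + 1) <= cc k m * (2 * k + 1) by rewrite leq_mul2r; lia.
nia.
Qed.

Lemma j0_rep k m : exists u, m = j0 k m + 2 * u /\ u <= k * j0 k m.
Proof.
have [H1 H2] := cc_bounds k m.
have H3 := cc_le k m.
rewrite /j0; set c := cc k m in H1 H2 H3 *.
exists ((m - c - (c + m) %% 2) %/ 2); split; nia.
Qed.

Lemma j0_min k m j u : m = j + 2 * u -> u <= k * j -> j0 k m <= j.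
Proof.
move=> Hm Hu.
have [H1 H2] := cc_bounds k m.
rewrite /j0; set c := cc k m in H1 H2 *.
have Hc : c < j + 1.
  rewrite -(ltn_pmul2r (_ : 0 < 2 * k + 1)); last lia.
  nia.
case: (ltnP c j) => Hcj; first lia.
have -> : c = j by lia.
lia.
Qed.

Lemma j0_min2 k m m' j u : m' = j + 2 * u -> u <= k * j -> m + 2 * k + 1 <= m' ->
  j0 k m <= j.
Proof.
move=> Hm Hu Hmm.
have [H1 H2] := cc_bounds k m.
rewrite /j0; set c := cc k m in H1 H2 *.
have Hc : c < j.
  rewrite -(ltn_pmul2r (_ : 0 < 2 * k + 1)); last lia.
  nia.
lia.
Qed.

Lemma j0_mono k m : j0 k m <= j0 k m.+2.
Proof.
rewrite /j0.
have : cc k m <= cc k m.+2 by rewrite /cc leq_div2r //; lia.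
set c := cc k m; set c' := cc k m.+2 => Hc.
case: (ltnP c c') => Hcc; first lia.
have -> : c' = c by lia.
lia.
Qed.

Lemma modcancel a d dinv z x y : dinv * d = z * a + 1 ->
  x * d = y * d %[mod a] -> x = y %[mod a].
Proof.
move=> Hinv H.
have E : forall v, v * d * dinv = (v * z) * a + v.
  move=> v; rewrite -mulnA (mulnC d) Hinv; ring.
have : x * d * dinv = y * d * dinv %[mod a] by rewrite -modnMml H modnMml.
by rewrite !E !modnMDl.
Qed.
Set Implicit Arguments. Unset Strict Implicit.

Lemma w_Rep a h d k m q : Rep a h d k (q * a + w a h d k m).
Proof.
have [u [Hm Hu]] := j0_rep k m.
exists q, (j0 k m), u; split => //.
rewrite /w {2}Hm; ring.
Qed.

Lemma w_min a h d k dinv z m n : 2 * k + 2 <= a -> dinv * d = z * a + 1 -> m < a ->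
  n = m * d %[mod a] -> Rep a h d k n -> w a h d k m <= n.
Proof.
move=> Ha Hinv Hm Hn [q [j [u [Hu En]]]].
have E2 : n = (q + j * h) * a + (j + 2 * u) * d by rewrite En; ring.
have Hm' : (j + 2 * u) * d = m * d %[mod a] by rewrite -Hn E2 modnMDl.
have := modcancel Hinv Hm'.
rewrite (modn_small Hm) => Hmod.
have Hdiv := divn_eq (j + 2 * u) a.
rewrite Hmod in Hdiv.
have [Hj0 Hmm] : j0 k m <= j /\ m <= j + 2 * u.
  case: (posnP ((j + 2 * u) %/ a)) => Hq.
  - rewrite Hq mul0n add0n in Hdiv; split; last lia.
    exact: (j0_min (esym Hdiv) Hu).
  - have : a <= (j + 2 * u) %/ a * a by rewrite leq_pmull.
    move=> Ha2; split; last lia.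
    apply: (j0_min2 (m' := j + 2 * u) _ Hu) => //; lia.
rewrite /w E2.
have : j0 k m * h * a <= j * h * a by rewrite leq_mul2r leq_mul2r Hj0 !orbT.
have : m * d <= (j + 2 * u) * d by rewrite leq_mul2r Hmm orbT.
nia.
Qed.

Definition key a dinv n := (n * dinv) %% a.

Lemma key_mod a d dinv z n : dinv * d = z * a + 1 -> key a dinv n * d = n %[mod a].
Proof.
move=> Hinv; rewrite /key modnMml -mulnA Hinv.
have -> : n * (z * a + 1) = (n * z) * a + n by ring.
by rewrite modnMDl.
Qed.

Lemma w_mod a h d k m : w a h d k m = m * d %[mod a].
Proof. by rewrite /w modnMDl. Qed.

Lemma NR_lt a h d k dinv z n : 0 < a -> dinv * d = z * a + 1 ->
  NR (tupleA a h d k) n -> n + a <= w a h d k (key a dinv n).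
Proof.
move=> Ha Hinv HN.
set m := key a dinv n.
have Hw : w a h d k m = n %[mod a] by rewrite w_mod (key_mod _ Hinv).
case: (ltnP n (w a h d k m)) => Hlt.
- have : a %| w a h d k m - n by rewrite -eqn_mod_dvd ?Hw // ltnW.
  move=> Hdv; have := dvdn_leq _ Hdv; lia.
- exfalso; apply: HN; apply/RepE.
  have : a %| n - w a h d k m by rewrite -eqn_mod_dvd // Hw.
  move=> /dvdnP [x Hx].
  have -> : n = x * a + w a h d k m by lia.
  exact: w_Rep.
Qed.

Lemma lt_NR a h d k dinv z m n : 2 * k + 2 <= a -> dinv * d = z * a + 1 -> m < a ->
  n = m * d %[mod a] -> n < w a h d k m -> NR (tupleA a h d k) n.
Proof.
move=> Ha Hinv Hm Hn Hlt /RepE HR.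
have := w_min Ha Hinv Hm Hn HR; lia.
Qed.

Lemma w_step a h d k m : w a h d k m <= w a h d k m.+2.
Proof.
rewrite /w.
have := j0_mono k m.
move=> H.
have : j0 k m * h * a <= j0 k m.+2 * h * a by rewrite leq_mul2r leq_mul2r H !orbT.
have : m * d <= m.+2 * d by rewrite leq_mul2r; apply/orP; right; lia.
nia.
Qed.

Lemma w_le_W a h d k m : 2 < a -> m < a ->
  w a h d k m <= maxn (w a h d k (a - 1)) (w a h d k (a - 2)).
Proof.
move=> Ha Hm0.
have : a - m <= a - m by [].
move: {2}(a - m) => n.
elim: n m Hm0 => [|n IH] m' Hm Hn; first lia.
case: (ltnP (m' + 2) a) => H.
- apply: leq_trans (w_step _ _ _ _ _) _.
  apply: IH; lia.
- case: (m' =P a - 1) => [->|H1]; first by rewrite leq_maxl.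
  have -> : m' = a - 2 by lia.
  by rewrite leq_maxr.
Qed.
Set Implicit Arguments. Unset Strict Implicit.

Lemma w_ge a h d k m : 0 < m -> 0 < h -> a <= w a h d k m.
Proof.
move=> Hm Hh.
have [H1 H2] := cc_bounds k m.
have Hc : 0 < cc k m by case: (cc k m) H1 => [|c] //=; lia.
have : 1 <= j0 k m by rewrite /j0; lia.
move=> Hj; rewrite /w.
have : 1 * 1 * a <= j0 k m * h * a by rewrite leq_mul2r leq_mul // orbT.
lia.
Qed.

Lemma key_lt a dinv n : 0 < a -> key a dinv n < a.
Proof. by move=> Ha; rewrite /key ltn_pmod. Qed.

Lemma frob a h d k dinv z : 2 < a -> 2 * k + 2 <= a -> 0 < h -> dinv * d = z * a + 1 ->
  is_frobenius (tupleA a h d k) (maxn (w a h d k (a - 1)) (w a h d k (a - 2)) - a).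
Proof.
move=> Ha3 Ha Hh Hinv; split.
- have Hgen : forall m, 0 < m -> m < a -> NR (tupleA a h d k) (w a h d k m - a).
    move=> m Hm0 Hm.
    have Hge := @w_ge a h d k m Hm0 Hh.
    apply: (lt_NR Ha Hinv Hm); last lia.
    rewrite -(w_mod a h d k) -(modnDr (w a h d k m - a)) subnK //.
  case: (leqP (w a h d k (a - 1)) (w a h d k (a - 2))) => H.
  +    apply: Hgen; lia.
  +    apply: Hgen; lia.
- move=> n HN.
  have := NR_lt (ltnW (ltnW Ha3)) Hinv HN.
  have := @w_le_W a h d k _ Ha3 (key_lt dinv n (ltnW (ltnW Ha3))).
  lia.
Qed.

Definition Lm a h d k m := [seq w a h d k m - a * i.+1 | i <- iota 0 (w a h d k m %/ a)].
Definition NRlist a h d k := flatten [seq Lm a h d k m | m <- iota 0 a].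

Lemma Lm_mem a h d k m x : 0 < a -> x \in Lm a h d k m ->
  x + a <= w a h d k m /\ x = m * d %[mod a].
Proof.
move=> Ha /mapP [i]; rewrite mem_iota add0n => Hi ->.
have : i.+1 * a <= w a h d k m by rewrite -leq_divRL.
move=> Hia; split; first nia.
rewrite -(w_mod a h d k) -(modnMDl i.+1 (w a h d k m - a * i.+1)).
congr (_ %% a); nia.
Qed.

Lemma NRlist_mem a h d k dinv z x : 2 < a -> 2 * k + 2 <= a -> dinv * d = z * a + 1 ->
  (x \in NRlist a h d k) <-> NR (tupleA a h d k) x.
Proof.
move=> Ha3 Ha Hinv; have Ha0 : 0 < a by lia.
split.
- move=> /flattenP [sl /mapP [m Hm ->] Hx].
  rewrite mem_iota add0n in Hm.
  have [H1 H2] := Lm_mem Ha0 Hx.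
  apply: (lt_NR Ha Hinv Hm H2); lia.
- move=> HN.
  have Hlt := NR_lt Ha0 Hinv HN.
  set m := key a dinv x in Hlt.
  have Hw : w a h d k m = x %[mod a] by rewrite (w_mod a h d k) (key_mod _ Hinv).
  have : a %| w a h d k m - x by rewrite -eqn_mod_dvd ?Hw //; lia.
  move=> /dvdnP [y Hy].
  apply/flattenP; exists (Lm a h d k m).
    by apply: map_f; rewrite mem_iota add0n key_lt.
  have Hy1 : 0 < y by nia.
  apply/mapP; exists (y - 1).
    rewrite mem_iota add0n subn1 prednK // leq_divRL //; nia.
  rewrite subn1 prednK //; nia.
Qed.

Lemma uniq_flat (T : eqType) (L : nat -> seq T) (kf : T -> nat) s :
  uniq s -> (forall m, m \in s -> uniq (L m)) ->
  (forall m x, m \in s -> x \in L m -> kf x = m) -> uniq (flatten (map L s)).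
Proof.
elim: s => [|m0 s IH] //= /andP [Hm0 Hs] HU HK.
rewrite cat_uniq; apply/and3P; split.
- by apply: HU; rewrite mem_head.
- apply/hasPn => x /flattenP [sl /mapP [m' Hm' ->] Hx].
  apply/negP => Hx0.
  have E1 := HK m0 x (mem_head _ _) Hx0.
  have Hm'' : m' \in m0 :: s by rewrite in_cons Hm' orbT.
  have E2 := HK m' x Hm'' Hx.
  by move: Hm0; rewrite -E1 E2 Hm'.
- apply: IH => //.
  + by move=> m Hm; apply: HU; rewrite in_cons Hm orbT.
  + by move=> m x Hm; apply: HK; rewrite in_cons Hm orbT.
Qed.

Lemma NRlist_uniq a h d k dinv z : 0 < a -> dinv * d = z * a + 1 -> uniq (NRlist a h d k).
Proof.
move=> Ha Hinv.
apply: (uniq_flat (kf := key a dinv)); first exact: iota_uniq.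
- move=> m _; rewrite map_inj_in_uniq ?iota_uniq //.
  move=> i i'; rewrite !mem_iota !add0n => Hi Hi'.
  have : i.+1 * a <= w a h d k m by rewrite -leq_divRL.
  have : i'.+1 * a <= w a h d k m by rewrite -leq_divRL.
  move=> H1 H2 E.
  have : a * i.+1 = a * i'.+1 by nia.
  by move/eqP; rewrite eqn_mul2l eqn0Ngt Ha /= => /eqP [].
- move=> m x; rewrite mem_iota add0n => Hm Hx.
  have [_ Hx2] := Lm_mem Ha Hx.
  have := key_mod x Hinv; rewrite Hx2 => H.
  have := modcancel Hinv H.
  by rewrite !modn_small // key_lt.
Qed.

Lemma NRlist_size a h d k :
  size (NRlist a h d k) = sumn [seq w a h d k m %/ a | m <- iota 0 a].
Proof.
rewrite /NRlist size_flatten /shape -map_comp.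
congr sumn; apply: eq_map => m /=.
by rewrite /Lm size_map size_iota.
Qed.
Set Implicit Arguments. Unset Strict Implicit.

Lemma sumn_mapD (f g : nat -> nat) s :
  sumn [seq f x + g x | x <- s] = sumn (map f s) + sumn (map g s).
Proof. elim: s => //= x s ->; lia. Qed.

Lemma sumn_mapMl c (f : nat -> nat) s :
  sumn [seq c * f x | x <- s] = c * sumn (map f s).
Proof. elim: s => //= [|x s ->]; lia. Qed.

Lemma sum_succ (f : nat -> nat) n :
  sumn [seq f m | m <- iota 0 n.+1] = sumn [seq f m | m <- iota 0 n] + f n.
Proof. by rewrite -addn1 iotaD map_cat sumn_cat /= addn0. Qed.

Lemma divqE K n q r : 0 < K -> n = q * K + r -> r < K -> n %/ K = q.
Proof. by move=> HK -> Hr; rewrite divnMDl // divn_small // addn0. Qed.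

Lemma j0_block k q r : r < 2 * k + 1 -> j0 k ((2 * k + 1) * q + 1 + r) = q + 1 + r %% 2.
Proof.
move=> Hr; rewrite /j0.
have -> : cc k ((2 * k + 1) * q + 1 + r) = q + 1.
  rewrite /cc; apply: (divqE (r := r)); [lia | ring | by []].
have -> : (q + 1 + ((2 * k + 1) * q + 1 + r)) = ((k * q + q + 1) * 2 + r) by ring.
by rewrite modnMDl.
Qed.

Lemma sum_block k q r : r <= 2 * k + 1 ->
  sumn [seq j0 k m | m <- iota 0 ((2 * k + 1) * q + 1 + r)] =
  sumn [seq j0 k m | m <- iota 0 ((2 * k + 1) * q + 1)] + r * (q + 1) + r %/ 2.
Proof.
elim: r => [|r IH] Hr; first by rewrite addn0; lia.
rewrite addnS sum_succ IH; last lia.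
rewrite j0_block; last lia.
lia.
Qed.

Lemma j0_zero k : j0 k 0 = 0.
Proof. by rewrite /j0 /cc add0n divn_small //; lia. Qed.

Lemma sum_full k q :
  2 * sumn [seq j0 k m | m <- iota 0 ((2 * k + 1) * q + 1)] =
  (2 * k + 1) * q * (q + 1) + 2 * k * q.
Proof.
elim: q => [|q IH]; first by rewrite muln0 add0n /= j0_zero; lia.
have -> : (2 * k + 1) * q.+1 + 1 = (2 * k + 1) * q + 1 + (2 * k + 1) by ring.
rewrite sum_block // !mulnDr IH.
have -> : (2 * k + 1) %/ 2 = k by lia.
nia.
Qed.

Lemma sum_all k s t : t <= 2 * k + 1 ->
  2 * sumn [seq j0 k m | m <- iota 0 ((2 * k + 1) * s + 1 + t)] =
  (2 * k + 1) * s * (s + 1) + 2 * k * s + 2 * (t * (s + 1) + t %/ 2).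
Proof.
move=> Ht; rewrite sum_block // -addnA mulnDr sum_full; lia.
Qed.

Lemma sum_iota n : 2 * sumn (iota 0 n) = n * (n - 1).
Proof.
elim: n => [|n IH] //.
have := sum_succ id n; rewrite !map_id => ->.
rewrite mulnDr IH; case: n {IH} => [|n] //; nia.
Qed.

Lemma sum_modperm a d dinv z : 0 < a -> dinv * d = z * a + 1 ->
  sumn [seq m * d %% a | m <- iota 0 a] = sumn (iota 0 a).
Proof.
move=> Ha Hinv; apply: perm_sumn; apply: uniq_perm.
- rewrite map_inj_in_uniq ?iota_uniq //.
  move=> m m'; rewrite !mem_iota !add0n => Hm Hm' E.
  have := modcancel Hinv E.
  by rewrite !modn_small.
- exact: iota_uniq.
- move=> x; rewrite mem_iota add0n; apply/mapP/idP.
  + by move=> [m _ ->]; rewrite ltn_pmod.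
  + move=> Hx; exists (key a dinv x); first by rewrite mem_iota add0n key_lt.
    by rewrite (key_mod _ Hinv) modn_small.
Qed.

Lemma sum_D a d dinv z : 0 < a -> dinv * d = z * a + 1 ->
  2 * sumn [seq m * d %/ a | m <- iota 0 a] + (a - 1) = d * (a - 1).
Proof.
move=> Ha Hinv.
have E : forall s : seq nat, sumn [seq m * d %/ a | m <- s] * a + sumn [seq m * d %% a | m <- s] = d * sumn s.
  elim=> [|m s IH] /=; first lia.
  have := divn_eq (m * d) a; nia.
have := E (iota 0 a); rewrite (sum_modperm Ha Hinv) => E2.
have H2 := sum_iota a.
set D := sumn _ in E2 *; set S := sumn _ in E2 H2.
have : a * (2 * D + (a - 1)) = a * (d * (a - 1)) by nia.
by move/eqP; rewrite eqn_mul2l eqn0Ngt Ha /= => /eqP.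
Qed.
Set Implicit Arguments. Unset Strict Implicit.
Import GRing.Theory.
Unset Implicit Arguments.

Theorem mainTheorem8 (a h d k s t : nat) :
  0 < a -> 0 < h -> 0 < d -> 0 < k ->
  coprime a d -> 2 < a ->
  3 <= 2 * k + 1 <= a - 1 ->
  a - 1 = (2 * k + 1) * s + t -> 1 <= t <= 2 * k + 1 ->
  (~~ odd t ->
     is_frobenius (tupleA a h d k)
       (h * a * ((a - 2) %/ (2 * k + 1) + 2) + (a - 1) * d - a)) /\
  (odd t ->
     is_frobenius (tupleA a h d k)
       (maxn (h * a * ((a - 2) %/ (2 * k + 1) + 1) + (a - 1) * d - a)
             (h * a * ((a - 3) %/ (2 * k + 1) + 2) + (a - 2) * d - a))) /\
  exists N : nat, is_genus (tupleA a h d k) N /\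
    (N%:R : rat)%R =
      ((h * s)%:R * ((k * s)%:R + t%:R + s%:R / 2 - 1 / 2)
      + (a - 1)%:R * (d%:R / 2 + h%:R - 1 / 2)
      + (h * t./2)%:R)%R.
Proof.
move=> Ha Hh Hd Hk Hcop Ha3 /andP [HK1 HK2] Ha1 /andP [Ht1 Ht2].
have [dinv [z Hinv]] : exists dinv z, dinv * d = z * a + 1.
  case: (egcdnP a Hd) => km kn Hkm _.
  exists km, kn; rewrite Hkm; congr (_ + _).
  by move: Hcop; rewrite coprime_sym /coprime => /eqP.
have Hk2 : 2 * k + 2 <= a by lia.
have HF := frob Ha3 Hk2 Hh Hinv.
have Hj1 : j0 k (a - 1) = s + 1 + (t - 1) %% 2.
  have -> : a - 1 = (2 * k + 1) * s + 1 + (t - 1) by lia.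
  by rewrite j0_block //; lia.
have Hf2 : (a - 2) %/ (2 * k + 1) = s.
  by apply: (@divqE _ _ _ (t - 1)); lia.
have HX : a <= h * a by rewrite leq_pmull.
have HY : (a - 1) * d = (a - 2) * d + d.
  by rewrite addnC -mulSn; congr (_ * _); lia.
split; [|split].
- move=> Hev.
  have Ht0 : t %% 2 = 0 by rewrite modn2; case: (odd t) Hev.
  have Hj2 : j0 k (a - 2) = s + 1 + (t - 2) %% 2.
    have -> : a - 2 = (2 * k + 1) * s + 1 + (t - 2) by lia.
    by rewrite j0_block //; lia.
  have E1 : (t - 1) %% 2 = 1 by lia.
  have E2 : (t - 2) %% 2 = 0 by lia.
  move: HF; rewrite /w Hj1 Hj2 Hf2 E1 E2 HY.
  set X := h * a in HX *; set Y := (a - 2) * d.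
  congr is_frobenius; lia.
- move=> Hod.
  have Ht0 : t %% 2 = 1 by rewrite modn2 Hod.
  move: HF; rewrite /w Hj1 Hf2.
  case: (ltnP 1 t) => Ht3.
  + have Hj2 : j0 k (a - 2) = s + 1 + (t - 2) %% 2.
      have -> : a - 2 = (2 * k + 1) * s + 1 + (t - 2) by lia.
      by rewrite j0_block //; lia.
    have Hf3 : (a - 3) %/ (2 * k + 1) = s.
      by apply: (@divqE _ _ _ (t - 2)); lia.
    have E1 : (t - 1) %% 2 = 0 by lia.
    have E2 : (t - 2) %% 2 = 1 by lia.
    rewrite Hj2 Hf3 E1 E2 HY.
    set X := h * a in HX *; set Y := (a - 2) * d.
    congr is_frobenius; lia.
  + have Ht : t = 1 by lia.
    subst t.
    case: s Ha1 Hj1 Hf2 => [|s'] Ha1 Hj1 Hf2; first by rewrite muln0 in Ha1; lia.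
    rewrite mulnS in Ha1.
    have Hj2 : j0 k (a - 2) = s'.+1.
      have -> : a - 2 = (2 * k + 1) * s' + 1 + 2 * k by lia.
      by rewrite j0_block //; lia.
    have Hf3 : (a - 3) %/ (2 * k + 1) = s'.
      by apply: (@divqE _ _ _ (2 * k)); lia.
    rewrite Hj2 Hf3 HY.
    set X := h * a in HX *; set Y := (a - 2) * d.
    have -> : (1 - 1) %% 2 = 0 by [].
    congr is_frobenius; lia.
- exists (size (NRlist a h d k)); split.
    exists (NRlist a h d k); split; first exact: NRlist_uniq Ha Hinv.
    split => // m; exact: NRlist_mem Ha3 Hk2 Hinv.
  rewrite NRlist_size.
  have Ew : [seq w a h d k m %/ a | m <- iota 0 a] =
            [seq h * j0 k m + m * d %/ a | m <- iota 0 a].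
    by apply: eq_map => m; rewrite /w divnMDl // mulnC.
  rewrite Ew sumn_mapD sumn_mapMl.
  set S := sumn [seq j0 k m | m <- iota 0 a].
  set D := sumn [seq m * d %/ a | m <- iota 0 a].
  have HS : 2 * S = (2 * k + 1) * s * (s + 1) + 2 * k * s + 2 * (t * (s + 1) + t %/ 2).
    have Ea : a = (2 * k + 1) * s + 1 + t by lia.
    by rewrite /S {1}Ea sum_all.
  have HD := sum_D Ha Hinv; rewrite -/D in HD.
  have Hnat : 2 * (h * S + D) + h * s + (a - 1) =
     h * s * (2 * k * s + 2 * t + s) + (a - 1) * (d + 2 * h) + 2 * h * (t %/ 2).
    have -> : 2 * (h * S + D) + h * s + (a - 1) = h * (2 * S) + (2 * D + (a - 1)) + h * s by ring.
    rewrite HS HD Ha1; ring.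
  rewrite divn2 in Hnat.
  have Hq : ((h * S + D)%:R : rat)%R =
     (((h * s * (2 * k * s + 2 * t + s) + (a - 1) * (d + 2 * h) + 2 * h * t./2)%:R
       - (h * s)%:R - (a - 1)%:R) / 2)%R.
    by rewrite -Hnat !natrD natrM; field.
  by rewrite Hq Ha1 !natrD !natrM; field.
Qed.
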